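(* Let $p$ be an odd prime and $1\le\ell\le p-1$ with Legendre symbol $\left(\frac{4\ell+1}{p}\right)=-1$. Then for all $n,k\ge0$, $$b\!\left(2p^{2k+3}n+\frac{(4\ell+1)p^{2k+2}-1}{2}\right)\equiv 0\pmod 4.$$
   Context: The mock theta function $\mathcal{B}(q)=\sum_{n\ge0}\frac{q^n(-q;q^2)_n}{(q;q^2)_{n+1}}=\sum_{n\ge0}b(n)q^n$, where $(a;q)_n=\prod_{j=0}^{n-1}(1-aq^j)$. *)

(* Defs.v *)
From mathcomp Require Import all_boot all_order all_algebra.
Set Implicit Arguments. Unset Strict Implicit. Unset Printing Implicit Defensive.
Import GRing.Theory Num.Theory.
Local Open Scope ring_scope.

(* Truncated expansion of 1/(1 - q^a) as a power series:
   sum_{i=0}^{N} q^(a*i); exact up to degree N when a >= 1. *)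
Definition geom_inv (a N : nat) : {poly int} := \sum_(i < N.+1) 'X^(a * i).

(* Truncation (valid up to degree N) of the m-th summand
   q^m (-q;q^2)_m / (q;q^2)_{m+1}
   = q^m * prod_{j<m} (1 + q^(2j+1)) * prod_{j<m+1} 1/(1 - q^(2j+1)). *)
Definition Bterm (m N : nat) : {poly int} :=
  'X^m * (\prod_(j < m) (1 + 'X^(2 * j + 1)))
       * (\prod_(j < m.+1) geom_inv (2 * j + 1) N).

(* b(n) = coefficient of q^n in B(q) = sum_{m>=0} q^m (-q;q^2)_m/(q;q^2)_{m+1}.
   Only summands m <= n contribute to q^n (each has valuation m), and the
   truncated geometric series are exact up to degree n. *)
Definition b (n : nat) : int := (\sum_(m < n.+1) Bterm m n)`_n.

Definition legendre (a p : nat) : int :=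
  if (p %| a)%N then 0
  else if [exists x : 'I_p, (x ^ 2 == a %[mod p])%N] then 1 else -1.

(* Main.v *)
Require Import Defs.
From mathcomp Require Import all_boot all_order all_algebra.
From mathcomp Require Import ring zify.
Set Implicit Arguments. Unset Strict Implicit. Unset Printing Implicit Defensive.
Import GRing.Theory Num.Theory.
Local Open Scope ring_scope.

Definition cg (m K : nat) (p q : {poly int}) :=
  exists r s : {poly int}, p - q = r *+ m + 'X^K * s.

Lemma cg_refl m K p : cg m K p p.
Proof. exists 0, 0; rewrite subrr mul0rn mulr0 addr0 //. Qed.

Lemma cg_eq m K p q : p = q -> cg m K p q.
Proof. by move=> ->; apply: cg_refl. Qed.

Lemma cg_sym m K p q : cg m K p q -> cg m K q p.
Proof. case=> r [s H]; exists (-r), (-s); rewrite -opprB H mulNrn; ring. Qed.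

Lemma cg_trans m K p q u : cg m K p q -> cg m K q u -> cg m K p u.
Proof.
case=> r [s H] [r' [s' H']]; exists (r + r'), (s + s').
have -> : p - u = (p - q) + (q - u) by ring.
rewrite H H' mulrnDl; ring.
Qed.

Lemma cg_add m K p1 q1 p2 q2 : cg m K p1 q1 -> cg m K p2 q2 -> cg m K (p1 + p2) (q1 + q2).
Proof.
case=> r [s H] [r' [s' H']]; exists (r + r'), (s + s').
have -> : p1 + p2 - (q1 + q2) = (p1 - q1) + (p2 - q2) by ring.
rewrite H H' mulrnDl; ring.
Qed.

Lemma cg_opp m K p q : cg m K p q -> cg m K (- p) (- q).
Proof. case=> r [s H]; exists (-r), (-s).
have -> : - p - - q = - (p - q) by ring. rewrite H mulNrn; ring. Qed.

Lemma cg_sub m K p1 q1 p2 q2 : cg m K p1 q1 -> cg m K p2 q2 -> cg m K (p1 - p2) (q1 - q2).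
Proof. by move=> h1 h2; apply: cg_add => //; apply: cg_opp. Qed.

Lemma cg_mul m K p1 q1 p2 q2 : cg m K p1 q1 -> cg m K p2 q2 -> cg m K (p1 * p2) (q1 * q2).
Proof.
case=> r [s H] [r' [s' H']]; exists (r * p2 + q1 * r'), (s * p2 + q1 * s').
have -> : p1 * p2 - q1 * q2 = (p1 - q1) * p2 + q1 * (p2 - q2) by ring.
rewrite H H'; ring.
Qed.

Lemma cg_sum m K k (F G : nat -> {poly int}) :
  (forall i, (i < k)%N -> cg m K (F i) (G i)) ->
  cg m K (\sum_(i < k) F i) (\sum_(i < k) G i).
Proof.
move=> H; apply: (big_ind2 (fun x y => cg m K x y)); first exact: cg_refl.
  by move=> ? ? ? ? ; apply: cg_add.
by move=> i _; apply: H.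
Qed.

Lemma cg_prod m K k (F G : nat -> {poly int}) :
  (forall i, (i < k)%N -> cg m K (F i) (G i)) ->
  cg m K (\prod_(i < k) F i) (\prod_(i < k) G i).
Proof.
move=> H; apply: (big_ind2 (fun x y => cg m K x y)); first exact: cg_refl.
  by move=> ? ? ? ? ; apply: cg_mul.
by move=> i _; apply: H.
Qed.

Lemma cg_XK m K j s : (K <= j)%N -> cg m K ('X^j * s) 0.
Proof.
move=> le; exists 0, ('X^(j - K) * s).
rewrite subr0 mul0rn add0r mulrA -exprD subnKC //.
Qed.

Lemma cg_weak m K p q : cg 0 K p q -> cg m K p q.
Proof. case=> r [s H]; exists 0, s; rewrite H; ring. Qed.

Lemma cg_coef m K p q N : cg m K p q -> (N < K)%N -> (m%:Z %| p`_N - q`_N)%Z.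
Proof.
case=> r [s H] lt; have := congr1 (fun x : {poly int} => x`_N) H => /=.
rewrite coefB coefD coefMn coefXnM lt addr0 => ->.
by apply/dvdzP; exists r`_N; rewrite -mulr_natr natz.
Qed.

Lemma cg_cancel m K a u p q :
  cg m K ((1 - 'X^a) * u) 1 -> cg m K ((1 - 'X^a) * p) ((1 - 'X^a) * q) -> cg m K p q.
Proof.
move=> Hu Hp.
have h1 : cg m K (u * ((1 - 'X^a) * p)) (u * ((1 - 'X^a) * q)) by apply: cg_mul => //; apply: cg_refl.
have e : forall x, u * ((1 - 'X^a) * x) = ((1 - 'X^a) * u) * x by move=> x; ring.
rewrite !e in h1.
have h2 : forall x, cg m K (((1 - 'X^a) * u) * x) x.
  move=> x; rewrite -[X in cg _ _ _ X]mul1r; apply: cg_mul => //; apply: cg_refl.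
apply: cg_trans (cg_sym (h2 p)) _; apply: cg_trans h1 _; exact: h2.
Qed.

Lemma geom_tele a j : (1 - 'X^a) * \sum_(i < j) 'X^(a * i) = 1 - 'X^(a * j) :> {poly int}.
Proof.
elim: j => [|j IH]; first by rewrite big_ord0 muln0 expr0 mulr0 subrr.
rewrite big_ord_recr /= mulrDr IH mulnS exprD; ring.
Qed.

Lemma geom_ok m T a : (0 < a)%N -> cg m T.+1 ((1 - 'X^a) * geom_inv a T) 1.
Proof.
move=> a0; rewrite /geom_inv geom_tele.
have -> : 1 - 'X^(a * T.+1) = 1 + - ('X^(a * T.+1) * 1) :> {poly int} by rewrite mulr1.
rewrite -[X in cg _ _ _ X]addr0; apply: cg_add; first exact: cg_refl.
rewrite -oppr0; apply: cg_opp; apply: cg_XK.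
by rewrite -{1}[T.+1]mul1n leq_mul2r a0 orbT.
Qed.

Lemma cg_sub0 m K p q : cg m K p q -> cg m K (p - q) 0.
Proof. by case=> r [s H]; exists r, s; rewrite subr0. Qed.

Lemma cg_of_sub m K p q : cg m K (p - q) 0 -> cg m K p q.
Proof. by case=> r [s H]; exists r, s; rewrite -H subr0. Qed.

Lemma cg_mul0 m K c p : cg m K p 0 -> cg m K (c * p) 0.
Proof. move=> h; rewrite -(mulr0 c); apply: cg_mul => //; exact: cg_refl. Qed.

Lemma cg_add0 m K p q : cg m K p 0 -> cg m K q 0 -> cg m K (p + q) 0.
Proof. move=> h1 h2; rewrite -(addr0 0); exact: cg_add. Qed.

Lemma cg_1sub m K p : cg m K p 1 -> cg m K (1 - p) 0.
Proof. move=> h; rewrite -(subrr 1); apply: cg_sub => //; exact: cg_refl. Qed.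

Definition Pm k : {poly int} := \prod_(j < k) (1 + 'X^(2*j+1)).
Definition Dinv T k : {poly int} := \prod_(j < k) geom_inv (2*j+3) T.
Definition cc T k := Pm k * Dinv T k.
Definition G T s := \sum_(k < T.+1) cc T k * 'X^(s*k).

Lemma cc0 T : cc T 0 = 1.
Proof. by rewrite /cc /Pm /Dinv !big_ord0 mulr1. Qed.

Lemma ccS T k : cc T k.+1 = cc T k * (1 + 'X^(2*k+1)) * geom_inv (2*k+3) T.
Proof. rewrite /cc /Pm /Dinv !big_ord_recr /=; ring. Qed.

Lemma sum_recl_recr (F H : nat -> {poly int}) T :
  \sum_(k < T.+1) F k - \sum_(k < T.+1) H k =
  F 0%N + (\sum_(k < T) F k.+1 - \sum_(k < T) H k) - H T.
Proof. rewrite big_ord_recl big_ord_recr /=; ring. Qed.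

Lemma G_rel T s : (0 < s)%N ->
  cg 0 T.+1 ((1 - 'X^s) * G T s) ((1 - 'X) + 'X * (1 + 'X^s) * G T (s+2)).
Proof.
move=> s0.
pose a k := cc T k * 'X^(s*k) * (1 - 'X^(2*k+1)).
pose b k := cc T k * 'X^(s*k.+1) * (1 + 'X^(2*k+1)).
have E : (1 - 'X^s) * G T s - 'X * (1 + 'X^s) * G T (s+2) =
         \sum_(k < T.+1) a k - \sum_(k < T.+1) b k.
  rewrite /G !mulr_sumr -!sumrB; apply: eq_bigr => k _.
  rewrite /a /b mulnDl mulnS !exprD; ring.
suff H : cg 0 T.+1 (\sum_(k < T.+1) a k - \sum_(k < T.+1) b k) (1 - 'X).
  case: H => r [u H]; exists r, u; rewrite -H -E; ring.
rewrite sum_recl_recr.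
have -> : a 0%N = 1 - 'X by rewrite /a cc0 muln0 expr0 !mul1r muln0 add0n expr1.
suff : cg 0 T.+1 ((\sum_(k < T) a k.+1 - \sum_(k < T) b k) - b T) 0.
  case=> r [u H]; exists r, u; rewrite -H; ring.
rewrite -[X in cg _ _ _ X]addr0.
apply: cg_add.
  apply: cg_sub0.
  apply: (@cg_sum _ _ _ (fun k => a k.+1) b) => k _.
  rewrite /a /b ccS.
  have e1 : (2 * k.+1 + 1 = 2 * k + 3)%N by lia.
  rewrite e1.
  have -> : cc T k * (1 + 'X^(2 * k + 1)) * geom_inv (2 * k + 3) T * 'X^(s * k.+1) *
     (1 - 'X^(2 * k + 3)) = ((1 - 'X^(2 * k + 3)) * geom_inv (2 * k + 3) T) *
     (cc T k * 'X^(s * k.+1) * (1 + 'X^(2 * k + 1))) by ring.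
  rewrite -[X in cg _ _ _ X]mul1r; apply: cg_mul; last exact: cg_refl.
  by apply: geom_ok; rewrite addn3.
rewrite -oppr0; apply: cg_opp; rewrite /b.
have -> : cc T T * 'X^(s * T.+1) * (1 + 'X^(2 * T + 1)) =
  'X^(s * T.+1) * (cc T T * (1 + 'X^(2 * T + 1))) by ring.
apply: cg_XK; by rewrite -{1}[T.+1]mul1n leq_mul2r s0 orbT.
Qed.

Definition tP s k : {poly int} := \prod_(i < k) (1 + 'X^(s + 2*i)).
Definition tInv T s k : {poly int} := \prod_(i < k) geom_inv (s + 2*i) T.
Definition Pi T s k := Pm k * tP s k * 'X^(2*k*k + k) * 'X^(s*k) * Dinv T k * tInv T s k.+1.
Definition Rn T s k := Pi T s k * (1 + 'X^(s + 4*k + 1)).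
Definition Rs T s := \sum_(k < T.+1) Rn T s k.
Definition cp T s k := (1 - 'X^s) * (1 - 'X^(2*k+1)) * Pi T s k.

Lemma Pi_S T s k : Pi T s k.+1 = Pi T s k * (1 + 'X^(2*k+1)) * (1 + 'X^(s+2*k)) *
  ('X^(2*k) * 'X^(2*k) * 'X^3) * 'X^s * geom_inv (2*k+3) T * geom_inv (s + 2*k + 2) T.
Proof.
rewrite /Pi /Pm /Dinv /tP /tInv.
rewrite (big_ord_recr k.+1) (big_ord_recr k (fun i => 1 + 'X^(2*i+1)))
        (big_ord_recr k (fun i => 1 + 'X^(s + 2*i))) (big_ord_recr k (fun i => geom_inv (2*i+3) T)) /=.
have e1 : (2 * k.+1 * k.+1 + k.+1 = (2*k*k + k) + (2*k + 2*k + 3))%N by lia.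
have e2 : (s * k.+1 = s * k + s)%N by lia.
have e3 : (s + 2 * k.+1 = s + 2 * k + 2)%N by lia.
rewrite e1 e2 e3 !exprD; ring.
Qed.

Lemma Pi_s2 T s k : geom_inv s T * (Pi T (s+2) k * (1 + 'X^s)) =
  Pi T s k * (1 + 'X^(s+2*k)) * 'X^(2*k) * geom_inv (s+2*k+2) T.
Proof.
rewrite /Pi /tP /tInv.
have h1 : (1 + 'X^s) * \prod_(i < k) (1 + 'X^(s + 2 + 2 * i)) =
   \prod_(i < k) (1 + 'X^(s + 2 * i)) * (1 + 'X^(s + 2 * k)) :> {poly int}.
  rewrite -(big_ord_recr k (fun i => 1 + 'X^(s + 2*i))) [in RHS]big_ord_recl muln0 addn0 /=.
  congr (_ * _); apply: eq_bigr => i _; congr (_ + 'X^_); rewrite /bump /=; lia.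
have h2 : geom_inv s T * \prod_(i < k.+1) geom_inv (s + 2 + 2 * i) T =
   \prod_(i < k.+1) geom_inv (s + 2 * i) T * geom_inv (s + 2 * k + 2) T.
  have e : (s + 2 * k + 2 = s + 2 * k.+1)%N by lia.
  rewrite e -(big_ord_recr k.+1 (fun i => geom_inv (s + 2*i) T)) [in RHS]big_ord_recl muln0 addn0 /=.
  congr (_ * _); apply: eq_bigr => i _; congr (geom_inv _ _); rewrite /bump /=; lia.
have e4 : ((s + 2) * k = s * k + 2 * k)%N by lia.
have -> : 'X^((s+2)*k) = 'X^(s*k) * 'X^(2*k) :> {poly int} by rewrite e4 exprD.
transitivity (Pm k * ((1 + 'X^s) * \prod_(i < k) (1 + 'X^(s + 2 + 2 * i))) * 'X^(2 * k * k + k) *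
   ('X^(s * k) * 'X^(2 * k)) * Dinv T k * (geom_inv s T * \prod_(i < k.+1) geom_inv (s + 2 + 2 * i) T)).
  ring.
rewrite h1 h2; ring.
Qed.

Lemma Rn_tele T s k : (0 < s)%N ->
  cg 0 T.+1 ((1 - 'X^s) * Rn T s k - 'X * (1 + 'X^s) * Rn T (s+2) k) (cp T s k - cp T s k.+1).
Proof.
move=> s0.
have Hu := @geom_ok 0 T (s + 2*k + 2) ltac:(by rewrite addn2).
have Hv := @geom_ok 0 T (2*k + 3) ltac:(by rewrite addn3).
have Hw := @geom_ok 0 T s s0.
have HZ := Pi_s2 T s k.
rewrite /cp Pi_S /Rn.
set P := Pi T s k. set u := geom_inv (s + 2*k + 2) T. set v := geom_inv (2*k + 3) T.
set w := geom_inv s T. set Q := Pi T (s+2) k.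
have HZ1 : cg 0 T.+1 (Q * (1 + 'X^s)) ((1 - 'X^s) * (P * (1 + 'X^(s + 2 * k)) * 'X^(2 * k) * u)).
  rewrite -HZ; have h := cg_mul (cg_sym Hw) (cg_refl 0 T.+1 (Q * (1 + 'X^s))).
  rewrite mul1r in h; apply: cg_trans h _; apply: cg_eq; by rewrite -mulrA.
set t := 'X^s. set e := 'X^(2*k).
have x1 : 'X^(s + 4*k + 1) = t*e*e*'X^1 :> {poly int} by rewrite /t /e -!exprD; congr (_ ^+ _); lia.
have x2 : 'X^(s + 2 + 4*k + 1) = t*e*e*'X^3 :> {poly int} by rewrite /t /e -!exprD; congr (_ ^+ _); lia.
have x3 : 'X^(2*k + 1) = e*'X^1 :> {poly int} by rewrite /e exprD.
have x4 : 'X^(s + 2*k) = t*e :> {poly int} by rewrite /e exprD.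
have x5 : 'X^(s + 2*k + 2) = t*e*'X^2 :> {poly int} by rewrite /e !exprD.
have x6 : 'X^(2*k + 3) = e*'X^3 :> {poly int} by rewrite /e exprD.
have x7 : 'X^(2*k.+1 + 1) = e*'X^3 :> {poly int} by rewrite /e -exprD; congr (_ ^+ _); lia.
rewrite x1 x2 x3 x4 x7; rewrite x4 in HZ1; rewrite x5 in Hu; rewrite x6 in Hv.
apply: cg_of_sub.
set LHS := (X in cg _ _ (X - _) _).
set RHS := (X in cg _ _ (_ - X) _).
have E : LHS - RHS =
  (1 - t) * P * e * 'X * (1 + t * e) * (1 - (1 - t * e * 'X^2) * u)
  - 'X * (1 + t * e * e * 'X^3) * (Q * (1 + t) - (1 - t) * (P * (1 + t * e) * e * u))
  + (1 - t) * P * (1 + e * 'X) * (1 + t * e) * (e * e * 'X^3) * t * u * ((1 - e * 'X^3) * v - 1).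
  rewrite /LHS /RHS; ring.
rewrite E; apply: cg_add0; first apply: cg_add0.
- by apply: cg_mul0; apply: cg_1sub.
- rewrite -oppr0; apply: cg_opp; apply: cg_mul0; apply: cg_sub0; exact: HZ1.
- apply: cg_mul0; rewrite -(subrr 1); apply: cg_sub => //; exact: cg_refl.
Qed.

Lemma tele (f : nat -> {poly int}) n : \sum_(k < n) (f k - f k.+1) = f 0%N - f n.
Proof. elim: n => [|n IH]; first by rewrite big_ord0 subrr. rewrite big_ord_recr /= IH; ring. Qed.

Lemma Rs_rel T s : (0 < s)%N ->
  cg 0 T.+1 ((1 - 'X^s) * Rs T s) ((1 - 'X) + 'X * (1 + 'X^s) * Rs T (s+2)).
Proof.
move=> s0.
have E : (1 - 'X^s) * Rs T s - 'X * (1 + 'X^s) * Rs T (s+2) =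
   \sum_(k < T.+1) ((1 - 'X^s) * Rn T s k - 'X * (1 + 'X^s) * Rn T (s+2) k).
  by rewrite /Rs !mulr_sumr -sumrB.
suff H : cg 0 T.+1 (\sum_(k < T.+1) ((1 - 'X^s) * Rn T s k - 'X * (1 + 'X^s) * Rn T (s+2) k)) (1 - 'X).
  case: H => r [u H]; exists r, u; rewrite -H -E; ring.
apply: cg_trans (cg_sum (G := fun k => cp T s k - cp T s k.+1) (fun k _ => Rn_tele T k s0)) _.
rewrite tele.
have -> : cp T s 0 = ((1 - 'X^s) * geom_inv s T) * (1 - 'X).
  rewrite /cp /Pi /Pm /tP /Dinv /tInv !big_ord0 big_ord1 /= !muln0 !addn0 !expr0; ring.
rewrite -[X in cg _ _ _ X]subr0; apply: cg_sub.
  rewrite -[X in cg _ _ _ X]mul1r; apply: cg_mul; [exact: geom_ok | exact: cg_refl].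
have -> : cp T s T.+1 = 'X^(s * T.+1) * ((1 - 'X^s) * (1 - 'X^(2 * T.+1 + 1)) * (Pm T.+1 * tP s T.+1 *
   'X^(2 * T.+1 * T.+1 + T.+1) * Dinv T T.+1 * tInv T s T.+2)).
  rewrite /cp /Pi; ring.
apply: cg_XK; by rewrite -{1}[T.+1]mul1n leq_mul2r s0 orbT.
Qed.

Lemma GR_diff T j : forall s, (0 < s)%N ->
  exists r, cg 0 T.+1 (G T s - Rs T s) ('X^j * r).
Proof.
elim: j => [|j IH] s s0.
  by exists (G T s - Rs T s); rewrite expr0 mul1r; apply: cg_refl.
have [r Hr] := IH (s + 2)%N (ltn_addr _ s0).
have Hw := @geom_ok 0 T s s0.
exists (geom_inv s T * (1 + 'X^s) * r).
apply: (cg_cancel Hw).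
have h1 := cg_sub (G_rel T s0) (Rs_rel T s0).
have h1' : cg 0 T.+1 ((1 - 'X^s) * (G T s - Rs T s)) ('X * (1 + 'X^s) * (G T (s+2) - Rs T (s+2))).
  case: h1 => a [b H]; exists a, b; rewrite -H; ring.
apply: cg_trans h1' _.
have h2 := cg_mul (cg_refl 0 T.+1 ('X * (1 + 'X^s))) Hr.
apply: cg_trans h2 _.
have h3 := cg_mul (cg_refl 0 T.+1 ('X * (1 + 'X^s) * ('X^j * r))) (cg_sym Hw).
rewrite mulr1 in h3; apply: cg_trans h3 _; apply: cg_eq; rewrite exprS; ring.
Qed.

Lemma G_eq_R T s : (0 < s)%N -> cg 0 T.+1 (G T s) (Rs T s).
Proof.
move=> s0; have [r H] := GR_diff T T.+1 s0.
apply: cg_of_sub; apply: cg_trans H _; exact: cg_XK.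
Qed.

Lemma Bsum_eq T : \sum_(m < T.+1) Bterm m T = geom_inv 1 T * G T 1.
Proof.
rewrite /G mulr_sumr; apply: eq_bigr => m _.
rewrite /Bterm /cc /Pm /Dinv big_ord_recl /= mul1n.
have -> : \prod_(i < m) geom_inv (2 * bump 0 i + 1) T = \prod_(i < m) geom_inv (2 * i + 3) T.
  by apply: eq_bigr => i _; congr (geom_inv _ _); rewrite /bump /=; lia.
ring.
Qed.

Definition Y T k := Pm k * \prod_(i < k) geom_inv (2*i+1) T.

Lemma RF_eq T k : geom_inv 1 T * Rn T 1 k =
  'X^(2*k*k + 2*k) * ((1 + 'X^(2*k+1) ^+ 2) * geom_inv (2*k+1) T ^+ 2) * Y T k ^+ 2.
Proof.
rewrite /Rn /Pi /Y /tP /tInv /Dinv.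
set A := \prod_(i < k) geom_inv (2 * i + 1) T.
have h1 : \prod_(i < k) (1 + 'X^(1 + 2 * i)) = Pm k :> {poly int}.
  by apply: eq_bigr => i _; rewrite addnC.
have h2 : \prod_(i < k.+1) geom_inv (1 + 2 * i) T = A * geom_inv (2 * k + 1) T.
  rewrite big_ord_recr /= addnC; congr (_ * _); apply: eq_bigr => i _; by rewrite addnC.
have h3 : geom_inv 1 T * \prod_(j < k) geom_inv (2 * j + 3) T = A * geom_inv (2 * k + 1) T.
  rewrite -(big_ord_recr k (fun i => geom_inv (2 * i + 1) T)) big_ord_recl /= muln0 add0n.
  congr (_ * _); apply: eq_bigr => i _.
  by congr (geom_inv _ _); rewrite /bump /=; lia.
have h4 : 'X^(1 + 4 * k + 1) = 'X^(2*k+1) ^+ 2 :> {poly int} by rewrite -exprM; congr (_ ^+ _); lia.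
have h5 : 'X^(2 * k * k + 2 * k) = 'X^(2 * k * k + k) * 'X^(1*k) :> {poly int}.
  by rewrite -exprD; congr (_ ^+ _); lia.
rewrite h1 h2 h4 h5.
transitivity (Pm k * Pm k * 'X^(2 * k * k + k) * 'X^(1 * k) *
   (geom_inv 1 T * \prod_(j < k) geom_inv (2 * j + 3) T) * (A * geom_inv (2 * k + 1) T) *
   (1 + 'X^(2 * k + 1) ^+ 2)); first ring.
rewrite h3; ring.
Qed.

Lemma cg_drop K p r : cg 4 K (p + r *+ 4) p.
Proof. exists r, 0; rewrite mulr0 addr0; ring. Qed.

Lemma Y_lin T k : exists z, cg 0 T.+1 (Y T k) (1 + z *+ 2).
Proof.
elim: k => [|k [z Hz]].
  by exists 0; rewrite /Y /Pm !big_ord0 mul0rn addr0 mulr1; apply: cg_refl.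
set x := 'X^(2*k+1) : {poly int}. set g := geom_inv (2*k+1) T.
exists (z + x * g + (z * (x * g)) *+ 2).
have -> : Y T k.+1 = Y T k * ((1 + x) * g).
  by rewrite /Y /Pm !big_ord_recr /= -/x -/g; ring.
have Hg : cg 0 T.+1 ((1 + x) * g) (1 + (x * g) *+ 2).
  have h := @geom_ok 0 T (2*k+1) (ltac:(by rewrite addn1)).
  have -> : (1 + x) * g = (1 - x) * g + (x * g) *+ 2 by ring.
  apply: cg_add => //; exact: cg_refl.
apply: cg_trans (cg_mul Hz Hg) _; apply: cg_eq; ring.
Qed.

Lemma Y_sq T k : cg 4 T.+1 (Y T k ^+ 2) 1.
Proof.
have [z Hz] := Y_lin T k.
have h : cg 4 T.+1 (Y T k ^+ 2) ((1 + z *+ 2) ^+ 2).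
  by rewrite !expr2; apply: cg_weak; apply: cg_mul.
apply: cg_trans h _.
have -> : (1 + z *+ 2) ^+ 2 = 1 + (z + z ^+ 2) *+ 4 by ring.
exact: cg_drop.
Qed.

Lemma G2 T a : (0 < a)%N ->
  cg 4 T.+1 ((1 + 'X^a ^+ 2) * geom_inv a T ^+ 2)
            (1 + ('X^a * (1 + 'X^a ^+ 2) * geom_inv (2*a) T ^+ 2) *+ 2).
Proof.
move=> a0.
set x := 'X^a : {poly int}. set g := geom_inv a T. set J := geom_inv (2*a) T.
have hJ : cg 0 T.+1 ((1 - x ^+ 2) * J) 1.
  have -> : x ^+ 2 = 'X^(2*a) by rewrite /x -exprM mulnC.
  by apply: geom_ok; rewrite muln_gt0.
have hg0 : cg 0 T.+1 ((1 - x) * g) 1 by apply: geom_ok.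
have hg : cg 0 T.+1 g ((1 + x) * J).
  apply: (cg_cancel hg0); apply: cg_trans hg0 _.
  apply: cg_sym; apply: cg_trans _ hJ; apply: cg_eq; rewrite -/x; ring.
have h1 : cg 0 T.+1 ((1 + x ^+ 2) * g ^+ 2) ((1 + x ^+ 2) * ((1 + x) * J) ^+ 2).
  by rewrite !expr2; apply: cg_mul; [exact: cg_refl | apply: cg_mul].
have h2 : cg 0 T.+1 ((1 + x ^+ 2) * J) (1 + (x ^+ 2 * J) *+ 2).
  have -> : (1 + x ^+ 2) * J = (1 - x ^+ 2) * J + (x ^+ 2 * J) *+ 2 by ring.
  apply: cg_add => //; exact: cg_refl.
have h3 : cg 0 T.+1 ((1 + x ^+ 2) * ((1 + x) * J) ^+ 2)
     ((1 + (x ^+ 2 * J) *+ 2) ^+ 2 + (x * (1 + x ^+ 2) * J ^+ 2) *+ 2).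
  have -> : (1 + x ^+ 2) * ((1 + x) * J) ^+ 2 =
     ((1 + x ^+ 2) * J) * ((1 + x ^+ 2) * J) + (x * (1 + x ^+ 2) * J ^+ 2) *+ 2 by ring.
  rewrite expr2; apply: cg_add; [by apply: cg_mul | exact: cg_refl].
move/(@cg_weak 4): h1 => h1; move/(@cg_weak 4): h3 => h3.
apply: cg_trans h1 _; apply: cg_trans h3 _.
have -> : (1 + (x ^+ 2 * J) *+ 2) ^+ 2 + (x * (1 + x ^+ 2) * J ^+ 2) *+ 2 =
   (1 + (x * (1 + x ^+ 2) * J ^+ 2) *+ 2) + (x ^+ 2 * J + (x ^+ 2 * J) ^+ 2) *+ 4 by ring.
exact: cg_drop.
Qed.

Definition evp (p : {poly int}) := forall i, odd i -> p`_i = 0.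

Lemma evp_add p q : evp p -> evp q -> evp (p + q).
Proof. by move=> hp hq i oi; rewrite coefD hp // hq // addr0. Qed.

Lemma evp_mul p q : evp p -> evp q -> evp (p * q).
Proof.
move=> hp hq i oi; rewrite coefM big1 // => j _.
case oj: (odd j); first by rewrite hp // mul0r.
rewrite hq ?mulr0 //; rewrite oddB; last by rewrite -ltnS.
by rewrite oi oj.
Qed.

Lemma evp_Xn m : evp 'X^(2 * m).
Proof.
move=> i oi; rewrite coefXn; case: eqP => // ei.
by move: oi; rewrite ei oddM.
Qed.

Lemma evp_1 : evp 1.
Proof. by have := evp_Xn 0; rewrite muln0 expr0. Qed.

Lemma evp_sum k (F : nat -> {poly int}) : (forall i, evp (F i)) -> evp (\sum_(i < k) F i).
Proof.
move=> h; apply: (big_ind (fun p => evp p)) => //.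
  by move=> i _; rewrite coef0.
by move=> ? ?; apply: evp_add.
Qed.

Lemma odd_Xn_evp c E i : odd c -> evp E -> ~~ odd i -> ('X^c * E)`_i = 0.
Proof.
move=> oc hE oi; rewrite coefXnM; case: ltnP => // le; apply: hE.
by rewrite oddB // oc (negbTE oi).
Qed.

Definition O T k : {poly int} := 'X^(2*k*k + 2*k) *
  ('X^(2*k+1) * (1 + 'X^(2*k+1) ^+ 2) * geom_inv (2*(2*k+1)) T ^+ 2).

Lemma O_even T k i : ~~ odd i -> (O T k)`_i = 0.
Proof.
move=> oi.
have -> : O T k = 'X^(2*k*k + 2*k + (2*k+1)) * ((1 + 'X^(2*k+1) ^+ 2) * geom_inv (2*(2*k+1)) T ^+ 2).
  by rewrite /O [in RHS]exprD; ring.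
apply: odd_Xn_evp => //.
  by rewrite !oddD !oddM /= ; case: (odd k).
apply: evp_mul.
  apply: evp_add; first exact: evp_1.
  by rewrite -exprM mulnC; apply: evp_Xn.
rewrite expr2; apply: evp_mul; rewrite /geom_inv;
  apply: (@evp_sum _ (fun j => 'X^(2 * (2 * k + 1) * j))) => j;
  by rewrite -mulnA; apply: evp_Xn.
Qed.

Lemma RF4 T k : cg 4 T.+1 (geom_inv 1 T * Rn T 1 k) ('X^(2*k*k + 2*k) + (O T k) *+ 2).
Proof.
rewrite RF_eq.
have h := cg_mul (cg_mul (cg_refl 4 T.+1 ('X^(2*k*k + 2*k))) (@G2 T (2*k+1) ltac:(by rewrite addn1))) (Y_sq T k).
apply: cg_trans h _; apply: cg_eq; rewrite /O; ring.
Qed.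

Lemma main_cg T : cg 4 T.+1 (\sum_(m < T.+1) Bterm m T)
   (\sum_(k < T.+1) 'X^(2*k*k + 2*k) + (\sum_(k < T.+1) O T k) *+ 2).
Proof.
rewrite Bsum_eq.
have h := @cg_weak 4 _ _ _ (cg_mul (cg_refl 0 T.+1 (geom_inv 1 T)) (G_eq_R T (ltn0Sn 0))).
apply: cg_trans h _.
rewrite /Rs mulr_sumr -sumrMnl -big_split /=.
apply: (@cg_sum _ _ _ (fun k => geom_inv 1 T * Rn T 1 k) (fun k => 'X^(2*k*k + 2*k) + (O T k) *+ 2)) => k _; exact: RF4.
Qed.

Lemma b_mod4 N : ~~ odd N -> (forall k, (2*k*k + 2*k != N)%N) -> (4 %| b N)%Z.
Proof.
move=> eN hk.
have := cg_coef (main_cg N) (ltnSn N).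
rewrite -/(b N) coefD coefMn !coef_sum.
have e1 : forall k : 'I_N.+1, true -> ('X^(2*k*k + 2*k) : {poly int})`_N = 0.
  by move=> k _; rewrite coefXn eq_sym (negbTE (hk k)).
rewrite (eq_bigr (fun _ => 0) e1) big1_eq.
rewrite (eq_bigr (fun _ => 0) (fun (k : 'I_N.+1) _ => O_even N k eN)) big1_eq.
by rewrite mul0rn addr0.
Qed.

Local Close Scope ring_scope.

Lemma sq_div p m : prime p -> forall y B, y ^ 2 = (p ^ m) ^ 2 * B -> p ^ m %| y.
Proof.
move=> pp; elim: m => [|m IH] y B H; first by rewrite expn0 dvd1n.
have p0 : 0 < p by apply: prime_gt0.
have : p %| y ^ 2 by rewrite H; apply: dvdn_mulr; apply: dvdn_exp => //; apply: dvdn_exp.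
rewrite (Euclid_dvdX _ _ pp) andbT => /dvdnP [y' ey].
have H' : y' ^ 2 = (p ^ m) ^ 2 * B.
  have h2 : 0 < p ^ 2 by rewrite expn_gt0 p0.
  have e : p ^ 2 * y' ^ 2 = p ^ 2 * ((p ^ m) ^ 2 * B).
    by rewrite -expnMn mulnC -ey H (expnS p m) expnMn mulnA.
  by apply/eqP; rewrite -(eqn_pmul2l h2) e.
by rewrite ey expnS mulnC dvdn_pmul2r // (IH _ _ H').
Qed.

Lemma pow_mod4 p j : odd p -> exists c, (p ^ 2) ^ j = 4 * c + 1.
Proof.
move=> op; have ep : p = 2 * p./2 + 1 by rewrite -{1}(odd_double_half p) op -mul2n addnC.
move: (p./2) ep => q ep.
elim: j => [|j [c Hc]]; first by exists 0; rewrite expn0.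
exists ((q * q + q) * (4 * c + 1) + c).
rewrite expnS Hc ep; ring.
Qed.

Lemma main_nat (p l : nat) :
  prime p -> odd p -> (1 <= l)%N -> (l <= p - 1)%N ->
  legendre (4 * l + 1) p = (-1)%R ->
  forall n k : nat,
    (4 %| b (2 * p ^ (2 * k + 3) * n + ((4 * l + 1) * p ^ (2 * k + 2) - 1) %/ 2))%Z.
Proof.
move=> pp op l1 lp hleg n k.
have p0 : (0 < p)%N by apply: prime_gt0.
set Q := (p ^ k.+1)%N.
have Q0 : (0 < Q)%N by rewrite expn_gt0 p0.
have e2 : (p ^ (2 * k + 2) = Q * Q)%N by rewrite /Q -expnD; congr (expn _ _); lia.
have e3 : (p ^ (2 * k + 3) = Q * Q * p)%N by rewrite /Q -!expnD -expnSr; congr (expn _ _); lia.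
rewrite e2 e3.
have [c Hc] := pow_mod4 k.+1 op.
have HQ : (Q * Q = 4 * c + 1)%N by rewrite -Hc -expnM mulnC expnM /Q expnS; ring.
set d := (4 * l * c + l + c)%N.
have HA : ((4 * l + 1) * (Q * Q) = 4 * d + 1)%N by rewrite HQ /d; ring.
rewrite HA.
have hd : ((4 * d + 1 - 1) %/ 2 = 2 * d)%N.
  rewrite addnK; have -> : (4 * d = 2 * d * 2)%N by ring. by rewrite mulnK.
rewrite hd.
apply: b_mod4.
  by rewrite oddD !oddM.
move=> j; apply/negP => /eqP hj.
set B := (4 * p * n + (4 * l + 1))%N.
have hy : ((2 * j + 1) ^ 2 = (Q ^ 2) * B)%N.
  have h1 : ((2 * j + 1) ^ 2 = 2 * (2 * j * j + 2 * j) + 1)%N by ring.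
  rewrite h1 hj /B (_ : Q ^ 2 = Q * Q)%N; last by ring.
  have : (4 * l * (Q * Q) + Q * Q = 4 * d + 1)%N by rewrite -HA; ring.
  nia.
have := sq_div pp hy => /dvdnP [z ez].
have hz : (z ^ 2 = B)%N.
  have q2 : (0 < Q ^ 2)%N by rewrite expn_gt0 Q0.
  apply/eqP; rewrite -(eqn_pmul2l q2) -hy ez /Q; apply/eqP; ring.
have hx : ((z %% p) ^ 2 == 4 * l + 1 %[mod p])%N.
  rewrite modnXm hz /B. have -> : (4 * p * n = (4 * n) * p)%N by ring. by rewrite modnMDl.
move: hleg; rewrite /legendre.
have -> : [exists x : 'I_p, (x ^ 2 == 4 * l + 1 %[mod p])%N].
  by apply/existsP; exists (Ordinal (ltn_pmod z p0)).
by case: ifP.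
Qed.

Local Open Scope ring_scope.

Theorem corollary1p6 (p l : nat) :
  prime p -> odd p -> (1 <= l)%N -> (l <= p - 1)%N ->
  legendre (4 * l + 1) p = -1 ->
  forall n k : nat,
    (4 %| b (2 * p ^ (2 * k + 3) * n + ((4 * l + 1) * p ^ (2 * k + 2) - 1) %/ 2))%Z.
Proof.
move=> pp op l1 lp hleg n k; exact: (main_nat pp op l1 lp hleg n k).
Qed.
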